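(* Let $n\ge1$ and let the zeros $z_1(x),\ldots,z_n(x)$ of $\psi_n(x,z)=\Gamma(1-z)P^z_n(\tanh x)$ with respect to $z$ be labeled so that they are ordered from large to small near $x=0$ and depend twice differentiably on $x$ with $z_j(x)\ne z_k(x)$ for $j\ne k$. Then $$z_\ell''(x)+2z_\ell(x)z_\ell'(x)=\sum_{j=1,\,j\neq\ell}^n\frac{2z_\ell'(x)z_j'(x)}{z_\ell(x)-z_j(x)},\qquad \ell=1,\ldots,n,$$ with initial conditions $z_\ell(0)=n+1-2\ell$ and $$z_\ell'(0)=\frac{-\prod_{j=1,\,j\neq|n+1-2\ell|}^n\bigl((n+1-2\ell)^2-j^2\bigr)}{2^{n-1}\prod_{j=1,\,j\neq\ell,\,n+1-\ell}^n 2(\ell-j)^2},\qquad \ell=1,\ldots,n.$$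
   Context: Fix an integer $n\ge1$. For $x\in\mathbb{R}$ and $z\in\mathbb{C}\setminus\{1,\ldots,n\}$ define $$\psi_n(x,z)=\frac{e^{zx}}{(1+e^{-2x})^n}\sum_{m=0}^n e^{-2mx}\binom{n}{m}\prod_{j=1}^m\frac{z+n+1-j}{z-j},$$ which equals $\Gamma(1-z)P_n^z(\tanh x)$, where $P_n^z$ is the associated Legendre function of degree $n$ and order $z$ and $\Gamma$ is the Euler gamma function. For each $x$, the polynomial $Q_x(z)=\sum_{m=0}^n e^{-2mx}\binom{n}{m}\prod_{j=1}^m(z+n+1-j)\prod_{k=m+1}^n(z-k)$ has degree $n$ with leading coefficient $(1+e^{-2x})^n$; its roots (with multiplicity) are denoted $z_1(x),\ldots,z_n(x)$, so that $\psi_n(x,z)=\frac{e^{zx}}{(1+e^{-2x})^n}\prod_{j=1}^n\frac{z-z_j(x)}{z-j}$. These are called the zeros of $\psi_n(x,\cdot)$. *)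

(* Defs.v *)
From Stdlib Require Import Reals List ZArith.
From Coquelicot Require Import Coquelicot.
Open Scope R_scope.

Definition csum (l : list nat) (f : nat -> C) : C :=
  fold_right (fun j acc => Cplus (f j) acc) (RtoC 0) l.
Definition cprod (l : list nat) (f : nat -> C) : C :=
  fold_right (fun j acc => Cmult (f j) acc) (RtoC 1) l.
Definition rprod (l : list nat) (f : nat -> R) : R :=
  fold_right (fun j acc => f j * acc) 1 l.

Definition Qpoly (n : nat) (x : R) (z : C) : C :=
  csum (seq 0 (S n)) (fun m =>
    Cmult (RtoC (exp (-2 * INR m * x) * Binomial.C n m))
      (Cmult (cprod (seq 1 m) (fun j => Cplus z (RtoC (INR n + 1 - INR j))))
             (cprod (seq (S m) (n - m)) (fun k => Cminus z (RtoC (INR k)))))).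

Definition absdiff (n l : nat) : nat :=
  Z.abs_nat (Z.of_nat (S n) - 2 * Z.of_nat l).

Definition zprime0 (n l : nat) : R :=
  let c := INR (S n) - 2 * INR l in
  (- rprod (filter (fun j => negb (Nat.eqb j (absdiff n l))) (seq 1 n))
          (fun j => c ^ 2 - INR j ^ 2))
  / (2 ^ (n - 1) *
     rprod (filter (fun j => andb (negb (Nat.eqb j l)) (negb (Nat.eqb j (S n - l))))
                   (seq 1 n))
           (fun j => 2 * (INR l - INR j) ^ 2)).

(* Main.v *)
Require Import Defs.
From Stdlib Require Import Reals List ZArith Lra Lia Classical.
From Coquelicot Require Import Coquelicot.
Open Scope R_scope.

Lemma isd_fst (f : R -> C) x l : is_derive f x l -> is_derive (fun t => fst (f t)) x (fst l).
Proof.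
  intros H. unfold is_derive in *.
  apply filterdiff_ext_lin with (fun y => fst (scal y l)).
  - apply (filterdiff_comp f (fun p : prod_NormedModule R_AbsRing R_NormedModule R_NormedModule => fst p) _ (fun p => fst p) H).
    apply filterdiff_linear. apply is_linear_fst.
  - intros y. reflexivity.
Qed.
Lemma isd_snd (f : R -> C) x l : is_derive f x l -> is_derive (fun t => snd (f t)) x (snd l).
Proof.
  intros H. unfold is_derive in *.
  apply filterdiff_ext_lin with (fun y => snd (scal y l)).
  - apply (filterdiff_comp f (fun p : prod_NormedModule R_AbsRing R_NormedModule R_NormedModule => snd p) _ (fun p => snd p) H).
    apply filterdiff_linear. apply is_linear_snd.
  - intros y. reflexivity.
Qed.
Lemma isd_pair (f : R -> C) x l :
  is_derive (fun t => fst (f t)) x (fst l) -> is_derive (fun t => snd (f t)) x (snd l) ->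
  is_derive f x l.
Proof.
  intros H1 H2. unfold is_derive in *.
  apply filterdiff_ext with (fun t => (fst (f t), snd (f t))).
  { intros y. destruct (f y); reflexivity. }
  apply filterdiff_ext_lin with (fun y => (scal y (fst l), scal y (snd l))).
  2:{ intros y. destruct l. reflexivity. }
  apply (filterdiff_comp'_2 (fun t => fst (f t)) (fun t => snd (f t)) (fun a b => (a,b)) x _ _ (fun a b => (a,b)) H1 H2).
  apply filterdiff_linear.
  apply is_linear_prod; [apply is_linear_fst | apply is_linear_snd].
Qed.

Lemma isd_iff (f : R -> C) x l : is_derive f x l <->
  is_derive (fun t => fst (f t)) x (fst l) /\ is_derive (fun t => snd (f t)) x (snd l).
Proof. split. intros H; split; [apply isd_fst|apply isd_snd]; auto. intros [H1 H2]; apply isd_pair; auto. Qed.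

Lemma rd_mult (u v : R -> R) x du dv : is_derive u x du -> is_derive v x dv ->
  is_derive (fun t => u t * v t) x (du * v x + u x * dv).
Proof. intros Hu Hv. apply (is_derive_mult u v x du dv Hu Hv). intros; apply Rmult_comm. Qed.

Lemma rd_eq (f : R -> R) x l1 l2 : is_derive f x l1 -> l1 = l2 -> is_derive f x l2.
Proof. intros; subst; auto. Qed.

Lemma isd_mult (f g : R -> C) x df dg : is_derive f x df -> is_derive g x dg ->
  is_derive (fun t => Cmult (f t) (g t)) x (Cplus (Cmult df (g x)) (Cmult (f x) dg)).
Proof.
  intros Hf Hg. apply isd_iff in Hf as [Hf1 Hf2]. apply isd_iff in Hg as [Hg1 Hg2].
  apply isd_iff; split; simpl.
  - eapply is_derive_ext. { intros t. reflexivity. }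
    eapply rd_eq.
    apply (is_derive_minus (fun t => fst (f t) * fst (g t)) (fun t => snd (f t) * snd (g t))); apply rd_mult; eauto.
    unfold minus, plus, opp; simpl. ring.
  - eapply rd_eq.
    apply (is_derive_plus (fun t => fst (f t) * snd (g t)) (fun t => snd (f t) * fst (g t))); apply rd_mult; eauto.
    unfold minus, plus, opp; simpl. ring.
Qed.

Lemma isd_plus (f g : R -> C) x df dg : is_derive f x df -> is_derive g x dg ->
  is_derive (fun t => Cplus (f t) (g t)) x (Cplus df dg).
Proof.
  intros Hf Hg. apply isd_iff in Hf as [Hf1 Hf2]. apply isd_iff in Hg as [Hg1 Hg2].
  apply isd_iff; split; simpl;
  [apply (is_derive_plus (fun t => fst (f t)) (fun t => fst (g t)))|apply (is_derive_plus (fun t => snd (f t)) (fun t => snd (g t)))]; auto.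
Qed.

Lemma isd_const (c : C) x : is_derive (fun _ : R => c) x (RtoC 0).
Proof. apply isd_iff; split; simpl; apply (is_derive_const (K:=R_AbsRing) (V:=R_NormedModule)). Qed.

Lemma isd_RtoC (g : R -> R) x d : is_derive g x d -> is_derive (fun t => RtoC (g t)) x (RtoC d).
Proof. intros H. apply isd_iff; split; simpl; auto. apply (is_derive_const (K:=R_AbsRing) (V:=R_NormedModule)). Qed.

Lemma isd_unique (f : R -> C) x l1 l2 : is_derive f x l1 -> is_derive f x l2 -> l1 = l2.
Proof.
  intros H1 H2. apply isd_iff in H1 as [A1 B1]. apply isd_iff in H2 as [A2 B2].
  apply is_derive_unique in A1, B1, A2, B2. destruct l1, l2; simpl in *. f_equal; congruence.
Qed.

Lemma isd_ext (f g : R -> C) x l : (forall t, f t = g t) -> is_derive f x l -> is_derive g x l.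
Proof. intros; eapply is_derive_ext; eauto. Qed.

Lemma isd_eq (f : R -> C) x l1 l2 : is_derive f x l1 -> l1 = l2 -> is_derive f x l2.
Proof. intros; subst; auto. Qed.

Lemma filter_neq_notin (l : list nat) k : ~ In k l -> filter (fun j => negb (Nat.eqb j k)) l = l.
Proof.
  induction l; simpl; intros H; auto.
  destruct (Nat.eqb a k) eqn:E. apply Nat.eqb_eq in E; subst; tauto.
  simpl. rewrite IHl; auto.
Qed.
Lemma cprod_nil f : cprod nil f = (RtoC 1).
Proof. reflexivity. Qed.
Lemma cprod_cons a l f : cprod (a :: l) f = Cmult (f a) (cprod l f).
Proof. reflexivity. Qed.
Lemma cprod_app (l1 l2 : list nat) f : cprod (l1 ++ l2) f = Cmult (cprod l1 f) (cprod l2 f).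
Proof. induction l1. rewrite app_nil_l, cprod_nil. ring. rewrite <- app_comm_cons, !cprod_cons, IHl1. ring. Qed.
Lemma cprod_ext_in (l : list nat) f g : (forall j, In j l -> f j = g j) -> cprod l f = cprod l g.
Proof. induction l; intros H; auto. rewrite !cprod_cons. rewrite H by (simpl; auto). rewrite IHl; auto. intros; apply H; simpl; auto. Qed.
Lemma cprod_ext (l : list nat) f g : (forall j, f j = g j) -> cprod l f = cprod l g.
Proof. intros; apply cprod_ext_in; auto. Qed.
Lemma cprod_map (l : list nat) (h : nat -> nat) f : cprod (map h l) f = cprod l (fun j => f (h j)).
Proof. induction l; auto. simpl map. rewrite !cprod_cons, IHl; auto. Qed.
Lemma cprod_shift s d k f : cprod (seq (s + d) k) f = cprod (seq s k) (fun j => f (j + d)%nat).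
Proof. revert s; induction k; intros s; auto. cbn [seq]. rewrite !cprod_cons. rewrite <- IHk. replace (S s + d)%nat with (S (s + d)) by lia. reflexivity. Qed.
Lemma cprod_rev s k f : cprod (seq s k) f = cprod (seq s k) (fun j => f (2 * s + k - 1 - j)%nat).
Proof.
  revert s; induction k; intros s; auto.
  rewrite seq_S at 2. rewrite cprod_app. cbn [seq]. rewrite cprod_cons, cprod_cons, cprod_nil.
  rewrite IHk. rewrite <- seq_shift, cprod_map.
  replace (2 * s + S k - 1 - (s + k))%nat with s by lia.
  rewrite (cprod_ext _ (fun j => f (2 * S s + k - 1 - S j)%nat) (fun j => f (2 * s + S k - 1 - j)%nat)).
  ring. intros j. f_equal. lia.
Qed.
Lemma cprod_split (l : list nat) f k : NoDup l -> In k l ->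
  cprod l f = Cmult (f k) (cprod (filter (fun j => negb (Nat.eqb j k)) l) f).
Proof.
  induction l; intros Hn Hi. contradiction.
  inversion Hn; subst. simpl filter. destruct Hi as [<-|Hi].
  - rewrite Nat.eqb_refl. simpl negb. rewrite filter_neq_notin; auto.
  - destruct (Nat.eqb a k) eqn:E.
    + apply Nat.eqb_eq in E; subst. contradiction.
    + simpl negb. rewrite !cprod_cons. rewrite IHl; auto. ring.
Qed.

Lemma csum_nil f : csum nil f = (RtoC 0).
Proof. reflexivity. Qed.
Lemma csum_cons a l f : csum (a :: l) f = Cplus (f a) (csum l f).
Proof. reflexivity. Qed.
Lemma csum_app (l1 l2 : list nat) f : csum (l1 ++ l2) f = Cplus (csum l1 f) (csum l2 f).
Proof. induction l1. rewrite app_nil_l, csum_nil. ring. rewrite <- app_comm_cons, !csum_cons, IHl1. ring. Qed.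
Lemma csum_ext_in (l : list nat) f g : (forall j, In j l -> f j = g j) -> csum l f = csum l g.
Proof. induction l; intros H; auto. rewrite !csum_cons. rewrite H by (simpl; auto). rewrite IHl; auto. intros; apply H; simpl; auto. Qed.
Lemma csum_ext (l : list nat) f g : (forall j, f j = g j) -> csum l f = csum l g.
Proof. intros; apply csum_ext_in; auto. Qed.
Lemma csum_map (l : list nat) (h : nat -> nat) f : csum (map h l) f = csum l (fun j => f (h j)).
Proof. induction l; auto. simpl map. rewrite !csum_cons, IHl; auto. Qed.
Lemma csum_shift s d k f : csum (seq (s + d) k) f = csum (seq s k) (fun j => f (j + d)%nat).
Proof. revert s; induction k; intros s; auto. cbn [seq]. rewrite !csum_cons. rewrite <- IHk. replace (S s + d)%nat with (S (s + d)) by lia. reflexivity. Qed.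
Lemma csum_rev s k f : csum (seq s k) f = csum (seq s k) (fun j => f (2 * s + k - 1 - j)%nat).
Proof.
  revert s; induction k; intros s; auto.
  rewrite seq_S at 2. rewrite csum_app. cbn [seq]. rewrite csum_cons, csum_cons, csum_nil.
  rewrite IHk. rewrite <- seq_shift, csum_map.
  replace (2 * s + S k - 1 - (s + k))%nat with s by lia.
  rewrite (csum_ext _ (fun j => f (2 * S s + k - 1 - S j)%nat) (fun j => f (2 * s + S k - 1 - j)%nat)).
  ring. intros j. f_equal. lia.
Qed.
Lemma csum_split (l : list nat) f k : NoDup l -> In k l ->
  csum l f = Cplus (f k) (csum (filter (fun j => negb (Nat.eqb j k)) l) f).
Proof.
  induction l; intros Hn Hi. contradiction.
  inversion Hn; subst. simpl filter. destruct Hi as [<-|Hi].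
  - rewrite Nat.eqb_refl. simpl negb. rewrite filter_neq_notin; auto.
  - destruct (Nat.eqb a k) eqn:E.
    + apply Nat.eqb_eq in E; subst. contradiction.
    + simpl negb. rewrite !csum_cons. rewrite IHl; auto. ring.
Qed.

Lemma rprod_nil f : rprod nil f = 1.
Proof. reflexivity. Qed.
Lemma rprod_cons a l f : rprod (a :: l) f = Rmult (f a) (rprod l f).
Proof. reflexivity. Qed.
Lemma rprod_app (l1 l2 : list nat) f : rprod (l1 ++ l2) f = Rmult (rprod l1 f) (rprod l2 f).
Proof. induction l1. rewrite app_nil_l, rprod_nil. ring. rewrite <- app_comm_cons, !rprod_cons, IHl1. ring. Qed.
Lemma rprod_ext_in (l : list nat) f g : (forall j, In j l -> f j = g j) -> rprod l f = rprod l g.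
Proof. induction l; intros H; auto. rewrite !rprod_cons. rewrite H by (simpl; auto). rewrite IHl; auto. intros; apply H; simpl; auto. Qed.
Lemma rprod_ext (l : list nat) f g : (forall j, f j = g j) -> rprod l f = rprod l g.
Proof. intros; apply rprod_ext_in; auto. Qed.
Lemma rprod_map (l : list nat) (h : nat -> nat) f : rprod (map h l) f = rprod l (fun j => f (h j)).
Proof. induction l; auto. simpl map. rewrite !rprod_cons, IHl; auto. Qed.
Lemma rprod_shift s d k f : rprod (seq (s + d) k) f = rprod (seq s k) (fun j => f (j + d)%nat).
Proof. revert s; induction k; intros s; auto. cbn [seq]. rewrite !rprod_cons. rewrite <- IHk. replace (S s + d)%nat with (S (s + d)) by lia. reflexivity. Qed.
Lemma rprod_rev s k f : rprod (seq s k) f = rprod (seq s k) (fun j => f (2 * s + k - 1 - j)%nat).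
Proof.
  revert s; induction k; intros s; auto.
  rewrite seq_S at 2. rewrite rprod_app. cbn [seq]. rewrite rprod_cons, rprod_cons, rprod_nil.
  rewrite IHk. rewrite <- seq_shift, rprod_map.
  replace (2 * s + S k - 1 - (s + k))%nat with s by lia.
  rewrite (rprod_ext _ (fun j => f (2 * S s + k - 1 - S j)%nat) (fun j => f (2 * s + S k - 1 - j)%nat)).
  ring. intros j. f_equal. lia.
Qed.
Lemma rprod_split (l : list nat) f k : NoDup l -> In k l ->
  rprod l f = Rmult (f k) (rprod (filter (fun j => negb (Nat.eqb j k)) l) f).
Proof.
  induction l; intros Hn Hi. contradiction.
  inversion Hn; subst. simpl filter. destruct Hi as [<-|Hi].
  - rewrite Nat.eqb_refl. simpl negb. rewrite filter_neq_notin; auto.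
  - destruct (Nat.eqb a k) eqn:E.
    + apply Nat.eqb_eq in E; subst. contradiction.
    + simpl negb. rewrite !rprod_cons. rewrite IHl; auto. ring.
Qed.


Lemma Cmult_integral (a b : C) : Cmult a b = RtoC 0 -> a = RtoC 0 \/ b = RtoC 0.
Proof.
  intros H. destruct (classic (a = RtoC 0)) as [E|E]; auto. right.
  replace b with (Cmult (Cinv a) (Cmult a b)) by (field; auto). rewrite H. ring.
Qed.

Lemma csum_scal (l : list nat) c f : csum l (fun j => Cmult c (f j)) = Cmult c (csum l f).
Proof. induction l. rewrite !csum_nil; ring. rewrite !csum_cons, IHl. ring. Qed.
Lemma csum_plus (l : list nat) f g : csum l (fun j => Cplus (f j) (g j)) = Cplus (csum l f) (csum l g).
Proof. induction l. rewrite !csum_nil; ring. rewrite !csum_cons, IHl. ring. Qed.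
Lemma csum_zero (l : list nat) f : (forall j, In j l -> f j = RtoC 0) -> csum l f = RtoC 0.
Proof. intros H. rewrite (csum_ext_in _ _ (fun _ => RtoC 0)); auto. clear H. induction l; auto. rewrite csum_cons, IHl. ring. Qed.
Lemma cprod_RtoC (l : list nat) g : cprod l (fun j => RtoC (g j)) = RtoC (rprod l g).
Proof. induction l; auto. rewrite cprod_cons, rprod_cons, IHl, RtoC_mult. auto. Qed.
Lemma csum_RtoC (l : list nat) g : csum l (fun j => RtoC (g j)) = RtoC (fold_right (fun j acc => g j + acc) 0 l).
Proof. induction l; auto. rewrite csum_cons, IHl, <- RtoC_plus. auto. Qed.
Lemma cprod_opp (l : list nat) f : cprod l (fun j => Copp (f j)) = Cmult (RtoC ((-1) ^ length l)) (cprod l f).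
Proof. induction l. rewrite !cprod_nil. simpl. ring. rewrite !cprod_cons, IHl. simpl length. cbn [pow]. rewrite RtoC_mult. ring. Qed.
Lemma rprod_opp (l : list nat) f : rprod l (fun j => - (f j)) = (-1) ^ length l * rprod l f.
Proof. induction l. rewrite !rprod_nil. simpl. ring. rewrite !rprod_cons, IHl. simpl length. cbn [pow]. ring. Qed.
Lemma rprod_mult (l : list nat) f g : rprod l (fun j => f j * g j) = rprod l f * rprod l g.
Proof. induction l. rewrite !rprod_nil; ring. rewrite !rprod_cons, IHl. ring. Qed.
Lemma rprod_const (l : list nat) c : rprod l (fun _ => c) = c ^ length l.
Proof. induction l. auto. rewrite !rprod_cons, IHl. simpl. ring. Qed.
Lemma cprod_zero (l : list nat) f k : In k l -> f k = RtoC 0 -> cprod l f = RtoC 0.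
Proof. induction l; intros Hi Hf; simpl in Hi. contradiction. rewrite cprod_cons. destruct Hi as [<-|Hi]. rewrite Hf; ring. rewrite IHl; auto; ring. Qed.
Lemma cprod_eq0 (l : list nat) f : cprod l f = RtoC 0 -> exists j, In j l /\ f j = RtoC 0.
Proof.
  induction l; intros H. rewrite cprod_nil in H. injection H; intros; lra.
  rewrite cprod_cons in H. apply Cmult_integral in H as [H|H].
  exists a; simpl; auto. destruct (IHl H) as [j [? ?]]. exists j; simpl; auto.
Qed.
Lemma cprod_neq0 (l : list nat) f : (forall j, In j l -> f j <> RtoC 0) -> cprod l f <> RtoC 0.
Proof. intros H E. apply cprod_eq0 in E as [j [? ?]]. eapply H; eauto. Qed.
Lemma rprod_neq0 (l : list nat) f : (forall j, In j l -> f j <> 0) -> rprod l f <> 0.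
Proof. induction l; intros H. rewrite rprod_nil; lra. rewrite rprod_cons. apply Rmult_integral_contrapositive_currified. apply H; simpl; auto. apply IHl; intros; apply H; simpl; auto. Qed.

Lemma csum_first n f : csum (seq 0 (S n)) f = Cplus (f 0%nat) (csum (seq 0 n) (fun m => f (S m))).
Proof. cbn [seq]. rewrite csum_cons. f_equal. rewrite <- seq_shift, csum_map. auto. Qed.
Lemma csum_last n f : csum (seq 0 (S n)) f = Cplus (csum (seq 0 n) f) (f n).
Proof. rewrite seq_S, csum_app, csum_cons, csum_nil. simpl. ring. Qed.

Lemma csum_tele n f g : f 0%nat = RtoC 0 -> g n = RtoC 0 -> (forall m, (m < n)%nat -> g m = Copp (f (S m))) ->
  csum (seq 0 (S n)) (fun m => Cplus (f m) (g m)) = RtoC 0.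
Proof.
  intros H0 Hn Hg. rewrite csum_plus, csum_first, csum_last, H0, Hn.
  rewrite (csum_ext_in (seq 0 n) g (fun m => Copp (f (S m)))).
  2:{ intros j Hj. apply in_seq in Hj. apply Hg; lia. }
  replace (csum (seq 0 n) (fun m => Copp (f (S m)))) with (Cmult (RtoC (-1)) (csum (seq 0 n) (fun m => f (S m)))).
  ring. rewrite <- csum_scal. apply csum_ext; intros; ring.
Qed.

Fixpoint cprodD (l : list nat) (f f' : nat -> R -> C) (x : R) : C :=
  match l with
  | nil => RtoC 0
  | a :: l' => Cplus (Cmult (f' a x) (cprod l' (fun j => f j x))) (Cmult (f a x) (cprodD l' f f' x))
  end.
Fixpoint cprodDD (l : list nat) (f f' f'' : nat -> R -> C) (x : R) : C :=
  match l with
  | nil => RtoC 0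
  | a :: l' => Cplus (Cplus (Cmult (f'' a x) (cprod l' (fun j => f j x))) (Cmult (f' a x) (cprodD l' f f' x)))
                     (Cplus (Cmult (f' a x) (cprodD l' f f' x)) (Cmult (f a x) (cprodDD l' f f' f'' x)))
  end.

Lemma isd_cprod (l : list nat) (f f' : nat -> R -> C) (x : R) : (forall j, In j l -> is_derive (f j) x (f' j x)) ->
  is_derive (fun t => cprod l (fun j => f j t)) x (cprodD l f f' x).
Proof.
  induction l; intros H.
  - simpl cprodD. apply isd_ext with (fun _ => RtoC 1). intros; reflexivity. apply isd_const.
  - simpl cprodD. apply isd_ext with (fun t => Cmult (f a t) (cprod l (fun j => f j t))).
    { intros; rewrite cprod_cons; auto. }
    apply isd_mult. apply H; simpl; auto. apply IHl. intros; apply H; simpl; auto.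
Qed.

Lemma isd_cprodD (l : list nat) (f f' f'' : nat -> R -> C) (x : R) : (forall j, In j l -> is_derive (f j) x (f' j x) /\ is_derive (f' j) x (f'' j x)) ->
  is_derive (fun t => cprodD l f f' t) x (cprodDD l f f' f'' x).
Proof.
  induction l; intros H.
  - simpl. apply isd_const.
  - simpl cprodD. simpl cprodDD.
    assert (Ha := H a (or_introl eq_refl)). destruct Ha as [Ha1 Ha2].
    assert (IH : is_derive (fun t => cprodD l f f' t) x (cprodDD l f f' f'' x)).
    { apply IHl. intros; apply H; simpl; auto. }
    assert (IP : is_derive (fun t => cprod l (fun j => f j t)) x (cprodD l f f' x)).
    { apply isd_cprod. intros; apply H; simpl; auto. }
    apply isd_plus; apply isd_mult; auto.
Qed.

Lemma cprodD_nz (l : list nat) (f f' : nat -> R -> C) (x : R) : (forall j, In j l -> f j x <> RtoC 0) ->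
  cprodD l f f' x = Cmult (cprod l (fun j => f j x)) (csum l (fun j => Cdiv (f' j x) (f j x))).
Proof.
  induction l; intros H.
  - simpl. ring.
  - simpl cprodD. rewrite IHl by (intros; apply H; simpl; auto).
    rewrite cprod_cons, csum_cons. assert (Ha := H a (or_introl eq_refl)). field. auto.
Qed.

Lemma isd_csum (l : list nat) (F : nat -> R -> C) (F' : nat -> C) x :
  (forall m, In m l -> is_derive (F m) x (F' m)) ->
  is_derive (fun t => csum l (fun m => F m t)) x (csum l F').
Proof.
  induction l; intros H.
  - apply isd_ext with (fun _ => RtoC 0). intros; reflexivity. apply isd_const.
  - apply isd_ext with (fun t => Cplus (F a t) (csum l (fun m => F m t))).
    { intros; rewrite csum_cons; auto. }
    rewrite csum_cons. apply isd_plus. apply H; simpl; auto. apply IHl; intros; apply H; simpl; auto.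
Qed.

Definition Am (n m : nat) (w : C) : C :=
  Cmult (cprod (seq 1 m) (fun j => Cplus w (RtoC (INR n + 1 - INR j))))
        (cprod (seq (S m) (n - m)) (fun k => Cminus w (RtoC (INR k)))).

Definition Qd (n k : nat) (x : R) (w : C) : C :=
  csum (seq 0 (S n)) (fun m => Cmult (RtoC ((-2 * INR m) ^ k * (exp (-2 * INR m * x) * Binomial.C n m))) (Am n m w)).

Lemma Qd0 n x w : Qpoly n x w = Qd n 0 x w.
Proof. unfold Qpoly, Qd. apply csum_ext; intros m. f_equal. f_equal. simpl; ring. Qed.


Lemma isd_RtoC_scal (g : R -> R) x d c : is_derive g x d ->
  is_derive (fun t => Cmult (RtoC (g t)) c) x (Cmult (RtoC d) c).
Proof.
  intros H. eapply isd_eq; [apply isd_mult; [apply isd_RtoC, H | apply isd_const] | ]. change (Cplus (Cmult (RtoC d) c) (Cmult (RtoC (g x)) (RtoC 0)) = Cmult (RtoC d) c). ring.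
Qed.

Lemma rd_term (a b k : R) (j : nat) x : is_derive (fun t => a ^ j * (exp (a * t) * b)) x (a ^ S j * (exp (a * x) * b)).
Proof.
  eapply rd_eq. auto_derive. auto. reflexivity. simpl. ring.
Qed.

Lemma isd_Qd n k x w : is_derive (fun t => Qd n k t w) x (Qd n (S k) x w).
Proof.
  unfold Qd. apply isd_csum. intros m _.
  apply isd_RtoC_scal.
  apply (rd_term (-2 * INR m) (Binomial.C n m) 0 k x).
Qed.

Ltac pushC := repeat first [rewrite RtoC_mult | rewrite RtoC_plus | rewrite RtoC_minus | rewrite RtoC_opp].

Lemma Am_rec n m w : (m < n)%nat ->
  Cmult (Cminus w (RtoC (INR (S m)))) (Am n (S m) w) = Cmult (Cplus w (RtoC (INR n - INR m))) (Am n m w).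
Proof.
  intros Hm. unfold Am.
  replace (n - m)%nat with (S (n - S m)) by lia.
  rewrite seq_S, cprod_app, cprod_cons, cprod_nil.
  cbn [seq]. rewrite cprod_cons.
  replace (INR n + 1 - INR (1 + m)) with (INR n - INR m) by (rewrite plus_INR; simpl; ring).
  ring.
Qed.

Lemma binom_rec n m : (m < n)%nat -> Binomial.C n (S m) * INR (S m) = (INR n - INR m) * Binomial.C n m.
Proof.
  intros Hm. rewrite Binomial.pascal_step3 by auto. rewrite minus_INR by lia.
  field. apply not_0_INR. lia.
Qed.

Lemma csum_lin3 (L : C -> C -> C -> C) (l : list nat) f0 f1 f2 :
  L (RtoC 0) (RtoC 0) (RtoC 0) = RtoC 0 ->
  (forall a b c a' b' c', L (Cplus a a') (Cplus b b') (Cplus c c') = Cplus (L a b c) (L a' b' c')) ->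
  L (csum l f0) (csum l f1) (csum l f2) = csum l (fun m => L (f0 m) (f1 m) (f2 m)).
Proof.
  intros H0 HA. induction l. rewrite !csum_nil; auto.
  rewrite !csum_cons, HA, IHl. auto.
Qed.

Lemma QE n x w :
  Cplus (Cmult (RtoC (1 + exp (-2 * x))) (Cplus (Qd n 2 x w) (Cmult (RtoC 2) (Cmult w (Qd n 1 x w)))))
        (Cmult (RtoC (4 * exp (-2 * x))) (Cplus (Cmult (RtoC (INR n)) (Cmult (Cplus (RtoC (INR n)) w) (Qd n 0 x w)))
                                                 (Cmult (RtoC (INR n)) (Qd n 1 x w)))) = RtoC 0.
Proof.
  set (t := exp (-2 * x)).
  set (L := fun a b c => Cplus (Cmult (RtoC (1 + t)) (Cplus c (Cmult (RtoC 2) (Cmult w b))))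
        (Cmult (RtoC (4 * t)) (Cplus (Cmult (RtoC (INR n)) (Cmult (Cplus (RtoC (INR n)) w) a))
                                                 (Cmult (RtoC (INR n)) b)))).
  change (L (Qd n 0 x w) (Qd n 1 x w) (Qd n 2 x w) = RtoC 0).
  unfold Qd. rewrite csum_lin3.
  2:{ unfold L. ring. }
  2:{ intros. unfold L. ring. }
  set (e := fun m : nat => exp (-2 * INR m * x)).
  set (a := fun m => Cmult (RtoC (Binomial.C n m)) (Am n m w)).
  set (f := fun m : nat => Cmult (Cmult (Cmult (RtoC (e m)) (RtoC (4 * INR m))) (Cminus (RtoC (INR m)) w)) (a m)).
  set (g := fun m : nat => Cmult (Cmult (Cmult (Cmult (RtoC (e (S m))) (RtoC 4)) (RtoC (INR n - INR m)))
                                  (Cplus (RtoC (INR n - INR m)) w)) (a m)).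
  rewrite (csum_ext _ _ (fun m => Cplus (f m) (g m))).
  - apply csum_tele.
    + unfold f. simpl INR. rewrite Rmult_0_r. ring.
    + unfold g. rewrite Rminus_diag. ring.
    + intros m Hm. unfold f, g, a.
      assert (H1 := Am_rec n m w Hm). assert (H2 := binom_rec n m Hm).
      apply (f_equal RtoC) in H2. rewrite !RtoC_mult in H2.
      transitivity (Cmult (Cmult (RtoC (e (S m))) (RtoC 4)) (Cmult (Cmult (RtoC (INR n - INR m)) (RtoC (Binomial.C n m)))
                                                       (Cmult (Cplus w (RtoC (INR n - INR m))) (Am n m w)))).
      { ring. }
      rewrite <- H1, <- H2. pushC. ring.
  - intros m. unfold f, g, a, L, e.
    replace (exp (-2 * INR (S m) * x)) with (exp (-2 * INR m * x) * t).
    2:{ unfold t. rewrite <- exp_plus. f_equal. rewrite S_INR. ring. }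
    simpl pow. pushC. ring.
Qed.

Ltac crR := cbv beta; match goal with |- @eq _ ?a ?b => change (@eq R a b) end; ring.
Ltac cr := cbv beta; match goal with |- @eq _ ?a ?b => change (@eq C a b) end; ring.

Lemma isd_cminus (c : C) (g : R -> C) t d : is_derive g t d -> is_derive (fun s => Cminus c (g s)) t (Copp d).
Proof.
  intros H. apply isd_ext with (fun s => Cplus c (Cmult (RtoC (-1)) (g s))).
  { intros; unfold Cminus; ring. }
  eapply isd_eq; [apply isd_plus; [apply isd_const| apply isd_mult; [apply isd_const | apply H]] |].
  cr.
Qed.

Definition Tr (n : nat) (t : R) := (1 + exp (-2 * t)) ^ n.
Definition Tr' (n : nat) (t : R) := INR n * (1 + exp (-2 * t)) ^ Nat.pred n * (-2 * exp (-2 * t)).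

Lemma rd_Tr n t : is_derive (Tr n) t (Tr' n t).
Proof. unfold Tr, Tr'. eapply rd_eq. auto_derive. auto. reflexivity. crR. Qed.
Lemma rd_Tr' n t : is_derive (Tr' n) t (Derive (Tr' n) t).
Proof. apply Derive_correct. unfold Tr'. auto_derive. auto. Qed.

Lemma in_L' n l j : In j (filter (fun j => negb (Nat.eqb j l)) (seq 1 n)) -> (1 <= j <= n)%nat /\ j <> l.
Proof.
  intros H. apply filter_In in H as [H1 H2]. apply in_seq in H1.
  split. lia. intros ->. rewrite Nat.eqb_refl in H2. discriminate.
Qed.

Section PartA.
Variable (n : nat) (hn : (1 <= n)%nat) (z z' z'' : nat -> R -> C).
Hypothesis hroots : forall (x : R) (w : C),
      Qpoly n x w =
      Cmult (RtoC ((1 + exp (-2 * x)) ^ n))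
            (cprod (seq 1 n) (fun j => Cminus w (z j x))).
Hypothesis hd1 : forall j x, (1 <= j <= n)%nat -> is_derive (z j) x (z' j x).
Hypothesis hd2 : forall j x, (1 <= j <= n)%nat -> is_derive (z' j) x (z'' j x).

Variable (l : nat) (hl : (1 <= l <= n)%nat) (w0 : C).

Let L' := filter (fun j => negb (Nat.eqb j l)) (seq 1 n).
Let f := fun j t => Cminus w0 (z j t).
Let f' := fun j t => Copp (z' j t).
Let f'' := fun j t => Copp (z'' j t).
Let H := fun t => cprod L' (fun j => f j t).
Let H' := fun t => cprodD L' f f' t.

Lemma Qrep t : Qd n 0 t w0 = Cmult (RtoC (Tr n t)) (Cmult (f l t) (H t)).
Proof.
  rewrite <- Qd0, hroots. unfold Tr, H, L', f. f_equal.
  apply (cprod_split (seq 1 n) (fun j => Cminus w0 (z j t)) l). apply seq_NoDup. apply in_seq. lia.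
Qed.

Definition D1v t := Cplus (Cmult (RtoC (Tr' n t)) (Cmult (f l t) (H t)))
                          (Cmult (RtoC (Tr n t)) (Cplus (Cmult (f' l t) (H t)) (Cmult (f l t) (H' t)))).

Lemma fd j t : (1 <= j <= n)%nat -> is_derive (f j) t (f' j t).
Proof. intros; unfold f, f'. apply isd_cminus, hd1; auto. Qed.
Lemma fd' j t : (1 <= j <= n)%nat -> is_derive (f' j) t (f'' j t).
Proof.
  intros. unfold f', f''. apply isd_ext with (fun s => Cmult (RtoC (-1)) (z' j s)). intros; ring.
  eapply isd_eq; [apply isd_mult; [apply isd_const|apply hd2; auto]|]. cr.
Qed.

Lemma Hd t : is_derive H t (H' t).
Proof. unfold H, H'. apply isd_cprod. intros j Hj. apply in_L' in Hj. apply fd. tauto. Qed.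

Lemma D1_is t : is_derive (fun s => Qd n 0 s w0) t (D1v t).
Proof.
  apply isd_ext with (fun s => Cmult (RtoC (Tr n s)) (Cmult (f l s) (H s))).
  { intros; rewrite Qrep; auto. }
  unfold D1v. apply (isd_mult (fun s => RtoC (Tr n s)) (fun s => Cmult (f l s) (H s))). apply (isd_RtoC (Tr n) t (Tr' n t) (rd_Tr n t)). apply isd_mult. apply fd; auto. apply Hd.
Qed.

Lemma Q1_eq t : Qd n 1 t w0 = D1v t.
Proof. eapply isd_unique. apply isd_Qd. apply D1_is. Qed.

Lemma pow_pred (a : R) k : (1 <= k)%nat -> a ^ k = a * a ^ Nat.pred k.
Proof. intros; destruct k; [lia|reflexivity]. Qed.

Hypothesis hdist : forall j k x, (1 <= j <= n)%nat -> (1 <= k <= n)%nat -> j <> k ->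
      z j x <> z k x.

Lemma partA x0 : w0 = z l x0 ->
       Cplus (z'' l x0) (Cmult (RtoC 2) (Cmult (z l x0) (z' l x0))) =
       csum L' (fun j => Cdiv (Cmult (RtoC 2) (Cmult (z' l x0) (z' j x0)))
                        (Cminus (z l x0) (z j x0))).
Proof.
  intros hw.
  assert (HQ2 : is_derive D1v x0 (Qd n 2 x0 w0)).
  { apply isd_ext with (fun s => Qd n 1 s w0). intros; apply Q1_eq. apply isd_Qd. }
  assert (HH' : is_derive H' x0 (cprodDD L' f f' f'' x0)).
  { unfold H'. apply isd_cprodD. intros j Hj. apply in_L' in Hj. split; [apply fd|apply fd']; tauto. }
  eassert (HD : is_derive D1v x0 _).
  { unfold D1v. apply isd_plus.
    - apply (isd_mult (fun s => RtoC (Tr' n s)) (fun s => Cmult (f l s) (H s))).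
      apply (isd_RtoC (Tr' n) x0 _ (rd_Tr' n x0)). apply isd_mult. apply fd; auto. apply Hd.
    - apply (isd_mult (fun s => RtoC (Tr n s)) (fun s => Cplus (Cmult (f' l s) (H s)) (Cmult (f l s) (H' s)))).
      apply (isd_RtoC (Tr n) x0 _ (rd_Tr n x0)). apply isd_plus. apply isd_mult. apply fd'; auto. apply Hd.
      apply isd_mult. apply fd; auto. exact HH'. }
  pose proof (isd_unique _ _ _ _ HQ2 HD) as HU. clear HQ2 HD.
  pose proof (QE n x0 w0) as E.
  rewrite HU, Q1_eq, Qrep in E. clear HU.
  assert (Hf0 : f l x0 = RtoC 0). { unfold f. rewrite hw. ring. }
  assert (Hnz : forall j, In j L' -> f j x0 <> RtoC 0).
  { intros j Hj. apply in_L' in Hj. unfold f. rewrite hw. intros E'.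
    destruct Hj as [Hj1 Hj2]. apply (hdist l j x0 hl Hj1). lia.
    replace (z l x0) with (Cplus (Cminus (z l x0) (z j x0)) (z j x0)) by ring. rewrite E'. ring. }
  assert (HHnz : H x0 <> RtoC 0). { unfold H. apply cprod_neq0. auto. }
  unfold D1v in E. cbv beta in E. rewrite Hf0 in E.
  unfold H' in E. rewrite cprodD_nz in E by auto. fold (H x0) in E.
  set (S := csum L' (fun j => Cdiv (f' j x0) (f j x0))) in E.
  unfold Tr, Tr' in E. rewrite (pow_pred _ n hn) in E.
  set (t := exp (-2 * x0)) in E. set (P := (1 + t) ^ Nat.pred n) in E.
  set (X := Cplus (f'' l x0) (Cplus (Cmult (RtoC 2) (Cmult (f' l x0) S)) (Cmult (RtoC 2) (Cmult w0 (f' l x0))))).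
  assert (E2 : Cmult (Cmult (RtoC ((1 + t) * ((1 + t) * P))) (H x0)) X = RtoC 0).
  { rewrite <- E. unfold X. pushC. ring. }
  apply Cmult_integral in E2 as [E2|E2].
  - exfalso. apply Cmult_integral in E2 as [E2|E2]; auto.
    apply RtoC_inj in E2. assert (0 < 1 + t) by (unfold t; pose proof (exp_pos (-2*x0)); lra).
    assert (0 < P) by (unfold P; apply pow_lt; lra).
    revert E2. apply Rgt_not_eq. apply Rmult_lt_0_compat; auto. apply Rmult_lt_0_compat; auto.
  - transitivity (Cmult (Cmult (RtoC (-2)) (z' l x0)) S).
    + rewrite <- hw.
      replace (Cplus (z'' l x0) (Cmult (RtoC 2) (Cmult w0 (z' l x0)))) with
        (Cplus (Cmult (Cmult (RtoC (-2)) (z' l x0)) S) (Copp X)) by (unfold X, f', f''; ring).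
      rewrite E2. ring.
    + unfold S. rewrite <- csum_scal. apply csum_ext_in. intros j Hj.
      assert (Hj' := Hnz j Hj). unfold f, f' in *. rewrite hw in *. field.
      intros E'. apply Hj'. rewrite E'. ring.
Qed.

End PartA.

Lemma INR_solve (a b c : nat) : (a + b = c)%nat -> INR a = INR c - INR b.
Proof. intros <-; rewrite plus_INR; ring. Qed.

Lemma Qd_at0 n k w : Qd n k 0 w = csum (seq 0 (S n)) (fun m => Cmult (RtoC ((-2 * INR m) ^ k * Binomial.C n m)) (Am n m w)).
Proof. unfold Qd. apply csum_ext; intros m. rewrite Rmult_0_r, exp_0, Rmult_1_l. auto. Qed.

Lemma shiftprod s K w :
  Cmult (cprod (seq (S s) K) (fun k => Cminus (Cplus w (RtoC 1)) (RtoC (INR k)))) (Cminus w (RtoC (INR (s + K)))) =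
  Cmult (Cminus w (RtoC (INR s))) (cprod (seq (S s) K) (fun k => Cminus w (RtoC (INR k)))).
Proof.
  assert (E1 : cprod (seq (S s) K) (fun k => Cminus (Cplus w (RtoC 1)) (RtoC (INR k))) = cprod (seq s K) (fun k => Cminus w (RtoC (INR k)))).
  { replace (S s) with (s + 1)%nat by lia. rewrite cprod_shift. apply cprod_ext; intros k.
    rewrite plus_INR. simpl INR. pushC. ring. }
  rewrite E1.
  transitivity (cprod (seq s (S K)) (fun k => Cminus w (RtoC (INR k)))).
  - rewrite seq_S, cprod_app, cprod_cons, cprod_nil. ring.
  - cbn [seq]. rewrite cprod_cons. auto.
Qed.

Lemma csum_shift2 n h u v : h 0%nat = u 0%nat -> v n = RtoC 0 -> (forall m, (m < n)%nat -> h (S m) = Cplus (u (S m)) (v m)) ->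
  csum (seq 0 (S n)) h = csum (seq 0 (S n)) (fun m => Cplus (u m) (v m)).
Proof.
  intros H0 Hn Hs. rewrite csum_plus, csum_first, (csum_first n u), (csum_last n v), Hn, H0.
  rewrite (csum_ext_in (seq 0 n) (fun m => h (S m)) (fun m => Cplus (u (S m)) (v m))).
  rewrite csum_plus. ring.
  intros j Hj. apply in_seq in Hj. apply Hs. lia.
Qed.

Definition P1 n m w := cprod (seq 1 m) (fun j => Cplus w (RtoC (INR n + 1 - INR j))).
Definition P2 n m w := cprod (seq (S (S m)) (n - S m)) (fun k => Cminus w (RtoC (INR k))).

Lemma Am_S_split n m w : (m < n)%nat -> Am n (S m) w = Cmult (Cmult (P1 n m w) (Cplus w (RtoC (INR n - INR m)))) (P2 n m w).
Proof.
  intros Hm. unfold Am, P1, P2. rewrite seq_S, cprod_app, cprod_cons, cprod_nil.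
  replace (INR n + 1 - INR (1 + m)) with (INR n - INR m) by (rewrite plus_INR; simpl; ring). ring.
Qed.
Lemma Am_split n m w : (m < n)%nat -> Am n m w = Cmult (Cmult (P1 n m w) (Cminus w (RtoC (INR (S m))))) (P2 n m w).
Proof.
  intros Hm. unfold Am, P1, P2. replace (n - m)%nat with (S (n - S m)) by lia.
  cbn [seq]. rewrite cprod_cons. ring.
Qed.
Lemma Am_S_shift n m w : (m < n)%nat -> Cmult (Cminus w (RtoC (INR n))) (Am n (S m) (Cplus w (RtoC 1))) =
   Cmult (Cmult (Cmult (Cplus w (RtoC (INR n + 1))) (P1 n m w)) (Cminus w (RtoC (INR (S m))))) (P2 n m w).
Proof.
  intros Hm. unfold Am, P1, P2. cbn [seq]. rewrite cprod_cons.
  rewrite <- seq_shift, cprod_map.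
  rewrite (cprod_ext _ (fun j => Cplus (Cplus w (RtoC 1)) (RtoC (INR n + 1 - INR (S j)))) (fun j => Cplus w (RtoC (INR n + 1 - INR j)))).
  2:{ intros j. rewrite S_INR. pushC. ring. }
  assert (HS := shiftprod (S m) (n - S m) w). replace (S m + (n - S m))%nat with n in HS by lia.
  transitivity (Cmult (Cmult (Cplus (Cplus w (RtoC 1)) (RtoC (INR n + 1 - INR 1))) (cprod (seq 1 m) (fun j => Cplus w (RtoC (INR n + 1 - INR j)))))
     (Cmult (cprod (seq (S (S m)) (n - S m)) (fun k => Cminus (Cplus w (RtoC 1)) (RtoC (INR k)))) (Cminus w (RtoC (INR n))))).
  ring. rewrite HS. simpl INR. pushC. ring.
Qed.

Lemma raising n w :
  Cplus (Cmult (Cplus w (RtoC (INR n))) (Qd n 0 0 w)) (Qd n 1 0 w) =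
  Cmult (Cminus w (RtoC (INR n))) (Qd n 0 0 (Cplus w (RtoC 1))).
Proof.
  rewrite !Qd_at0. rewrite <- !csum_scal, <- csum_plus.
  set (a := fun m => Cmult (RtoC (Binomial.C n m)) (Am n m w)).
  transitivity (csum (seq 0 (S n)) (fun m => Cplus (Cmult (Cminus w (RtoC (INR m))) (a m)) (Cmult (RtoC (INR n - INR m)) (a m)))).
  { apply csum_ext. intros m. unfold a. simpl pow. pushC. ring. }
  symmetry. apply csum_shift2.
  - unfold a, Am. replace (n - 0)%nat with n by lia. change (seq 1 0) with (@nil nat). rewrite !cprod_nil.
    assert (HS := shiftprod 0 n w). replace (0 + n)%nat with n in HS by lia.
    transitivity (Cmult (RtoC ((-2 * INR 0) ^ 0 * Binomial.C n 0)) (Cmult (cprod (seq 1 n) (fun k => Cminus (Cplus w (RtoC 1)) (RtoC (INR k)))) (Cminus w (RtoC (INR n))))). ring.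
    rewrite HS. simpl. pushC. ring.
  - unfold a. rewrite Rminus_diag. ring.
  - intros m Hm. unfold a.
    rewrite (Am_S_split n m w Hm), (Am_split n m w Hm).
    transitivity (Cmult (RtoC (Binomial.C n (S m))) (Cmult (Cminus w (RtoC (INR n))) (Am n (S m) (Cplus w (RtoC 1))))).
    { simpl pow. pushC. ring. }
    rewrite Am_S_shift by auto.
    assert (HB := binom_rec n m Hm). apply (f_equal RtoC) in HB. rewrite !RtoC_mult in HB.
    transitivity (Cplus (Cmult (Cmult (Cminus w (RtoC (INR (S m)))) (RtoC (Binomial.C n (S m)))) (Cmult (Cmult (P1 n m w) (Cplus w (RtoC (INR n - INR m)))) (P2 n m w)))
      (Cmult (Cmult (RtoC (Binomial.C n (S m))) (RtoC (INR (S m)))) (Cmult (Cmult (P1 n m w) (Cminus w (RtoC (INR (S m))))) (P2 n m w)))).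
    { rewrite S_INR. pushC. ring. }
    rewrite HB. pushC. ring.
Qed.


Lemma Am_par n m w : (m <= n)%nat -> Am n (n - m) (Copp w) = Cmult (RtoC ((-1) ^ n)) (Am n m w).
Proof.
  intros Hm. unfold Am. replace (n - (n - m))%nat with m by lia.
  assert (E1 : cprod (seq 1 (n - m)) (fun j => Cplus (Copp w) (RtoC (INR n + 1 - INR j))) =
               Cmult (RtoC ((-1) ^ (n - m))) (cprod (seq (S m) (n - m)) (fun k => Cminus w (RtoC (INR k))))).
  { rewrite cprod_rev. rewrite (cprod_ext_in _ _ (fun j => Copp (Cminus w (RtoC (INR (j + m)))))).
    - rewrite cprod_opp, seq_length. f_equal. replace (S m) with (1 + m)%nat by lia. rewrite cprod_shift. auto.
    - intros j Hj. apply in_seq in Hj. rewrite (INR_solve (2 * 1 + (n - m) - 1 - j) (j + m) (n + 1)) by lia.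
      rewrite !plus_INR. simpl INR. pushC. ring. }
  assert (E2 : cprod (seq (S (n - m)) m) (fun k => Cminus (Copp w) (RtoC (INR k))) =
               Cmult (RtoC ((-1) ^ m)) (cprod (seq 1 m) (fun j => Cplus w (RtoC (INR n + 1 - INR j))))).
  { rewrite cprod_rev. rewrite (cprod_ext_in _ _ (fun k => Copp (Cplus w (RtoC (INR (2 * S (n - m) + m - 1 - k)))))).
    - rewrite cprod_opp, seq_length. f_equal. replace (S (n - m)) with (1 + (n - m))%nat by lia. rewrite cprod_shift.
      apply cprod_ext_in. intros j Hj. apply in_seq in Hj.
      rewrite (INR_solve (2 * (1 + (n - m)) + m - 1 - (j + (n - m))) j (n + 1)) by lia.
      rewrite plus_INR. simpl INR. auto.
    - intros k Hk. pushC. ring. }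
  rewrite E1, E2. replace n with ((n - m) + m)%nat at 3 by lia. rewrite pow_add, RtoC_mult. ring.
Qed.

Lemma csum_rev0 n f : csum (seq 0 (S n)) f = csum (seq 0 (S n)) (fun m => f (n - m)%nat).
Proof. rewrite csum_rev. apply csum_ext. intros j. f_equal. lia. Qed.

Lemma Q0_par n w : Qd n 0 0 (Copp w) = Cmult (RtoC ((-1) ^ n)) (Qd n 0 0 w).
Proof.
  rewrite !Qd_at0, csum_rev0, <- csum_scal. apply csum_ext_in. intros m Hm. apply in_seq in Hm.
  rewrite Am_par by lia. rewrite <- Binomial.pascal_step1 by lia. simpl pow. pushC. ring.
Qed.

Lemma Q1_par n w : Qd n 1 0 (Copp w) =
  Cmult (RtoC ((-1) ^ n)) (Cplus (Cmult (RtoC (-2 * INR n)) (Qd n 0 0 w)) (Copp (Qd n 1 0 w))).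
Proof.
  rewrite !Qd_at0, csum_rev0.
  rewrite (csum_lin3 (fun a b _ => Cmult (RtoC ((-1) ^ n)) (Cplus (Cmult (RtoC (-2 * INR n)) a) (Copp b)))
     _ _ _ (fun _ => RtoC 0)).
  2:{ ring. }
  2:{ intros. ring. }
  apply csum_ext_in. intros m Hm. apply in_seq in Hm.
  rewrite Am_par by lia. rewrite <- Binomial.pascal_step1 by lia. rewrite minus_INR by lia. simpl pow. pushC. ring.
Qed.

Lemma Wrel n w : Cmult (Cplus w (RtoC (INR n))) (Qd n 0 0 (Cminus w (RtoC 1))) =
                 Cmult (Cminus w (RtoC (INR n))) (Qd n 0 0 (Cplus w (RtoC 1))).
Proof.
  assert (R1 := raising n w). assert (R2 := raising n (Copp w)).
  rewrite Q0_par, Q1_par in R2.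
  replace (Cplus (Copp w) (RtoC 1)) with (Copp (Cminus w (RtoC 1))) in R2 by ring.
  rewrite Q0_par in R2.
  set (s := RtoC ((-1) ^ n)) in R2.
  set (Q := Qd n 0 0 w) in *. set (Q1 := Qd n 1 0 w) in *. set (Qm := Qd n 0 0 (Cminus w (RtoC 1))) in *.
  set (Qp := Qd n 0 0 (Cplus w (RtoC 1))) in *.
  assert (Hs : s <> RtoC 0).
  { unfold s. intros E. apply RtoC_inj in E. revert E. apply pow_nonzero. lra. }
  set (A := Cplus (Cmult (Cminus (RtoC (INR n)) w) Q) (Cplus (Cmult (RtoC (-2 * INR n)) Q) (Copp Q1))).
  set (B := Cmult (Cminus (Copp w) (RtoC (INR n))) Qm).
  assert (R2' : Cmult s A = Cmult s B).
  { transitivity (Cplus (Cmult (Cplus (Copp w) (RtoC (INR n))) (Cmult s Q)) (Cmult s (Cplus (Cmult (RtoC (-2 * INR n)) Q) (Copp Q1)))).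
    unfold A. pushC. ring. rewrite R2. unfold B. pushC. ring. }
  assert (AB : A = B).
  { assert (E : Cmult s (Cminus A B) = RtoC 0). { unfold Cminus. rewrite Cmult_plus_distr_l, R2'. ring. }
    apply Cmult_integral in E as [E|E]. contradiction.
    replace A with (Cplus (Cminus A B) B) by ring. rewrite E. ring. }
  rewrite <- R1.
  transitivity (Cplus (Cmult (Cplus w (RtoC (INR n))) Q) (Cminus (Cplus (Cmult (Cminus (RtoC (INR n)) w) Q) (Cmult (RtoC (-2 * INR n)) Q)) B)).
  unfold B. pushC. ring.
  rewrite <- AB. unfold A. pushC. ring.
Qed.

Lemma filter_andb (l : list nat) (f g : nat -> bool) :
  filter (fun j => andb (f j) (g j)) l = filter g (filter f l).
Proof. induction l; simpl; auto. destruct (f a); simpl; auto. destruct (g a); simpl; rewrite IHl; auto. Qed.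

Lemma filter_split n k : (1 <= k <= n)%nat ->
  filter (fun j => negb (Nat.eqb j k)) (seq 1 n) = seq 1 (k - 1) ++ seq (S k) (n - k).
Proof.
  intros Hk. replace n with ((k - 1) + S (n - k))%nat at 1 by lia.
  rewrite seq_app, filter_app. f_equal.
  - apply filter_neq_notin. rewrite in_seq. lia.
  - replace (1 + (k - 1))%nat with k by lia. cbn [seq filter]. rewrite Nat.eqb_refl. simpl.
    apply filter_neq_notin. rewrite in_seq. lia.
Qed.

Lemma rprod_INR s k : rprod (seq (S s) k) INR * INR (fact s) = INR (fact (s + k)).
Proof.
  induction k. simpl. rewrite Nat.add_0_r. ring.
  rewrite seq_S, rprod_app, rprod_cons, rprod_nil.
  replace (s + S k)%nat with (S (s + k)) by lia. rewrite fact_simpl, mult_INR, <- IHk.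
  replace (S s + k)%nat with (S (s + k)) by lia. ring.
Qed.

Lemma rprod_fact k : rprod (seq 1 k) INR = INR (fact k).
Proof. assert (H := rprod_INR 0 k). simpl in H. rewrite Rmult_1_r in H. exact H. Qed.

Definition op k := rprod (seq 1 k) (fun i => 2 * INR i - 1).

Lemma op_fact k : op k * 2 ^ k * INR (fact k) = INR (fact (2 * k)).
Proof.
  induction k. unfold op. simpl. ring.
  unfold op in *. rewrite seq_S, rprod_app, rprod_cons, rprod_nil.
  replace (2 * S k)%nat with (S (S (2 * k))) by lia. rewrite !fact_simpl, !mult_INR, <- IHk.
  rewrite !S_INR, mult_INR. simpl pow. simpl INR. ring.
Qed.

Lemma L1 a b : rprod (seq 1 (S (a + b))) (fun j => 2 * INR j - 2 * INR (S a) + 1) = (-1) ^ a * op a * op (S b).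
Proof.
  replace (S (a + b)) with (a + S b)%nat by lia. rewrite seq_app, rprod_app.
  rewrite (rprod_rev 1 a). rewrite (rprod_ext_in (seq 1 a) _ (fun j => - (2 * INR j - 1))).
  2:{ intros j Hj. apply in_seq in Hj. rewrite (INR_solve (2 * 1 + a - 1 - j) j (S a)) by lia. rewrite S_INR. ring. }
  rewrite rprod_opp, seq_length, rprod_shift.
  rewrite (rprod_ext (seq 1 (S b)) _ (fun j => 2 * INR j - 1)) by (intros; rewrite plus_INR, S_INR; ring).
  unfold op. ring.
Qed.

Lemma L2 a b : rprod (filter (fun j => negb (Nat.eqb j (S a))) (seq 1 (S (a + b)))) (fun j => 2 * INR j - 2 * INR (S a))
   = (-1) ^ a * 2 ^ a * INR (fact a) * (2 ^ b * INR (fact b)).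
Proof.
  rewrite filter_split by lia. replace (S a - 1)%nat with a by lia. replace (S (a + b) - S a)%nat with b by lia.
  rewrite rprod_app.
  rewrite (rprod_rev 1 a). rewrite (rprod_ext_in (seq 1 a) _ (fun j => - (2 * INR j))).
  2:{ intros j Hj. apply in_seq in Hj. rewrite (INR_solve (2 * 1 + a - 1 - j) j (S a)) by lia. ring. }
  rewrite rprod_opp, seq_length, rprod_mult, rprod_const, seq_length, rprod_fact.
  replace (S (S a)) with (1 + S a)%nat by lia. rewrite rprod_shift.
  rewrite (rprod_ext _ _ (fun j => 2 * INR j)).
  2:{ intros j. rewrite plus_INR. ring. }
  rewrite rprod_mult, rprod_const, seq_length, rprod_fact. ring.
Qed.

Lemma m1sq a : (-1) ^ a * (-1) ^ a = 1.
Proof. rewrite <- pow_add. replace (a + a)%nat with (2 * a)%nat by lia. apply pow_1_even. Qed.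

Lemma L3 a b : rprod (filter (fun j => negb (Nat.eqb j (S a))) (seq 1 (S (a + b)))) (fun j => 2 * (INR (S a) - INR j) ^ 2)
   = 2 ^ (a + b) * (INR (fact a)) ^ 2 * (INR (fact b)) ^ 2.
Proof.
  rewrite (rprod_ext _ _ (fun j => (/2) * ((2 * INR j - 2 * INR (S a)) * (2 * INR j - 2 * INR (S a))))).
  2:{ intros j. field. }
  rewrite rprod_mult, rprod_mult, L2, rprod_const.
  rewrite filter_split by lia. rewrite length_app, !seq_length. replace (S a - 1)%nat with a by lia.
  replace (S (a + b) - S a)%nat with b by lia.
  rewrite pow_inv, !pow_add.
  assert (H2a : 2 ^ a <> 0) by (apply pow_nonzero; lra).
  assert (H2b : 2 ^ b <> 0) by (apply pow_nonzero; lra).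
  assert (M := m1sq a).
  set (X := (-1) ^ a * 2 ^ a * INR (fact a) * (2 ^ b * INR (fact b))).
  replace (X * X) with (((-1) ^ a * (-1) ^ a) * (2 ^ a * 2 ^ b) ^ 2 * (INR (fact a) ^ 2 * INR (fact b) ^ 2)) by (unfold X; ring).
  rewrite M. field. auto.
Qed.

Lemma fact_pos' k : INR (fact k) <> 0.
Proof. apply INR_fact_neq_0. Qed.

Lemma L4 d n : (1 <= d <= n)%nat ->
  rprod (filter (fun j => negb (Nat.eqb j d)) (seq 1 n)) (fun j => INR d ^ 2 - INR j ^ 2) * (2 * INR d ^ 2)
  = (-1) ^ (n - d) * INR (fact (n - d)) * INR (fact (n + d)).
Proof.
  intros Hd. rewrite filter_split by lia.
  rewrite (rprod_ext _ _ (fun j => (INR d - INR j) * (INR d + INR j))) by (intros; ring).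
  rewrite rprod_mult, !rprod_app.
  assert (A1 : rprod (seq 1 (d - 1)) (fun j => INR d - INR j) = INR (fact (d - 1))).
  { rewrite rprod_rev, <- rprod_fact. apply rprod_ext_in. intros j Hj. apply in_seq in Hj.
    rewrite (INR_solve (2 * 1 + (d - 1) - 1 - j) j d) by lia. ring. }
  assert (A2 : rprod (seq (S d) (n - d)) (fun j => INR d - INR j) = (-1) ^ (n - d) * INR (fact (n - d))).
  { replace (S d) with (1 + d)%nat by lia. rewrite rprod_shift.
    rewrite (rprod_ext _ _ (fun j => - INR j)) by (intros; rewrite plus_INR; ring).
    rewrite rprod_opp, seq_length, rprod_fact. auto. }
  assert (B1 : rprod (seq 1 (d - 1)) (fun j => INR d + INR j) * INR (fact d) = INR (fact (2 * d - 1))).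
  { replace 1%nat with (1 + 0)%nat at 1 by lia.
    rewrite (rprod_ext_in _ _ (fun j => INR (j + d))).
    2:{ intros j _. rewrite plus_INR. ring. }
    rewrite <- (rprod_shift 1 d). replace (1 + d)%nat with (S d) by lia. rewrite rprod_INR. f_equal. f_equal. lia. }
  assert (B2 : rprod (seq (S d) (n - d)) (fun j => INR d + INR j) * INR (fact (2 * d)) = INR (fact (n + d))).
  { replace (S d) with (1 + d)%nat by lia. rewrite rprod_shift.
    rewrite (rprod_ext _ _ (fun j => INR (j + 2 * d))).
    2:{ intros j. rewrite !plus_INR, mult_INR. simpl INR. ring. }
    rewrite <- (rprod_shift 1 (2 * d)). replace (1 + 2 * d)%nat with (S (2 * d)) by lia. rewrite rprod_INR. f_equal. f_equal. lia. }
  assert (Fd : INR (fact d) = INR d * INR (fact (d - 1))).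
  { replace d with (S (d - 1)) at 1 by lia. rewrite fact_simpl, mult_INR. f_equal. f_equal. lia. }
  assert (F2d : INR (fact (2 * d)) = 2 * INR d * INR (fact (2 * d - 1))).
  { replace (2 * d)%nat with (S (2 * d - 1)) at 1 by lia. rewrite fact_simpl, mult_INR. f_equal.
    rewrite S_INR, minus_INR by lia. rewrite mult_INR. simpl. ring. }
  assert (Hd0 : INR d <> 0) by (apply not_0_INR; lia).
  assert (HF1 := fact_pos' (d - 1)). assert (HF2 := fact_pos' (2 * d - 1)).
  rewrite A1, A2.
  rewrite Fd in B1. rewrite F2d in B2.
  set (b1 := rprod (seq 1 (d - 1)) (fun j => INR d + INR j)) in *.
  set (b2 := rprod (seq (S d) (n - d)) (fun j => INR d + INR j)) in *.
  rewrite <- B2. rewrite <- B1 at 1. field.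
Qed.

Definition cc (n j : nat) : R := INR (S n) - 2 * INR j.

Definition Ev a b := INR (fact (2 * a + 1)) * INR (fact (2 * b + 1)) / (4 ^ (a + b) * INR (fact a) ^ 2 * INR (fact b) ^ 2).

Lemma op_fact' k : op k = INR (fact (2 * k)) / (2 ^ k * INR (fact k)).
Proof. rewrite <- op_fact. field. split. apply fact_pos'. apply pow_nonzero; lra. Qed.

Lemma LHS_E a b :
  - (cc (S (a + b)) (S a) - INR (S (a + b))) * rprod (seq 1 (S (a + b))) (fun j => cc (S (a + b)) (S a) + 1 - cc (S (a + b)) j) /
    rprod (filter (fun j => negb (Nat.eqb j (S a))) (seq 1 (S (a + b)))) (fun j => cc (S (a + b)) (S a) - cc (S (a + b)) j) = Ev a b.
Proof.
  rewrite (rprod_ext (seq 1 _) _ (fun j => 2 * INR j - 2 * INR (S a) + 1)) by (intros; unfold cc; ring).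
  rewrite (rprod_ext (filter _ _) _ (fun j => 2 * INR j - 2 * INR (S a))) by (intros; unfold cc; ring).
  rewrite L1, L2. unfold Ev. rewrite !op_fact'.
  assert (F1 : INR (fact (2 * S b)) = (2 * INR b + 2) * INR (fact (2 * b + 1))).
  { replace (2 * S b)%nat with (S (2 * b + 1)) by lia. rewrite fact_simpl, mult_INR, S_INR, plus_INR, mult_INR. simpl INR. ring. }
  assert (F2 : INR (fact (2 * a + 1)) = (2 * INR a + 1) * INR (fact (2 * a))).
  { replace (2 * a + 1)%nat with (S (2 * a)) by lia. rewrite fact_simpl, mult_INR, S_INR, mult_INR. simpl INR. ring. }
  assert (F3 : INR (fact (S b)) = (INR b + 1) * INR (fact b)).
  { rewrite fact_simpl, mult_INR, S_INR. ring. }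
  assert (P4 : 4 ^ (a + b) = 2 ^ a * 2 ^ a * (2 ^ b * 2 ^ b)).
  { rewrite pow_add. replace 4 with (2 * 2) by ring. rewrite !Rpow_mult_distr. ring. }
  rewrite F1, F2, F3, P4. change (2 ^ S b) with (2 * 2 ^ b).
  unfold cc. rewrite !S_INR, !plus_INR.
  assert (H1 := fact_pos' a). assert (H2 := fact_pos' b). assert (H3 := fact_pos' (2 * a)). assert (H4 := fact_pos' (2 * b + 1)).
  assert (H5 : 2 ^ a <> 0) by (apply pow_nonzero; lra). assert (H6 : 2 ^ b <> 0) by (apply pow_nonzero; lra).
  assert (H7 : (-1) ^ a <> 0) by (apply pow_nonzero; lra).
  assert (H8 : INR b + 1 <> 0) by (pose proof (pos_INR b); lra).
  field. repeat split; auto.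
Qed.

Lemma Z_E a b : zprime0 (S (a + b)) (S a) = Ev a b.
Proof.
  unfold zprime0. cbv zeta.
  replace (S (S (a + b)) - S a)%nat with (S b) by lia.
  replace (S (a + b) - 1)%nat with (a + b)%nat by lia.
  rewrite (filter_andb _ (fun j => negb (Nat.eqb j (S a))) (fun j => negb (Nat.eqb j (S b)))).
  replace (INR (S (S (a + b))) - 2 * INR (S a)) with (INR b - INR a) by (rewrite !S_INR, plus_INR; ring).
  assert (H1 := fact_pos' a). assert (H2 := fact_pos' b).
  assert (P2 : 2 ^ (a + b) <> 0) by (apply pow_nonzero; lra).
  assert (P4 : 4 ^ (a + b) = 2 ^ (a + b) * 2 ^ (a + b)).
  { replace 4 with (2 * 2) by ring. rewrite Rpow_mult_distr. ring. }
  unfold Ev. rewrite P4.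
  destruct (Nat.eq_dec a b) as [<-|Hab].
  - replace (absdiff (S (a + a)) (S a)) with 0%nat by (unfold absdiff; lia).
    rewrite filter_neq_notin by (rewrite in_seq; lia).
    rewrite (filter_neq_notin (filter _ _)).
    2:{ intros Hin. apply filter_In in Hin as [_ Hf]. rewrite Nat.eqb_refl in Hf. discriminate. }
    rewrite L3.
    rewrite (rprod_ext _ _ (fun j => - (INR j * INR j))) by (intros; ring).
    rewrite rprod_opp, rprod_mult, seq_length, rprod_fact.
    replace (S (a + a)) with (2 * a + 1)%nat by lia.
    replace (2 * a + 1)%nat with (S (2 * a)) at 1 by lia. rewrite pow_1_odd.
    field. split; auto.
  - set (d := absdiff (S (a + b)) (S a)).
    assert (Hd : d = ((b - a) + (a - b))%nat) by (unfold d, absdiff; lia).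
    assert (Hd1 : (1 <= d <= S (a + b))%nat) by lia.
    assert (HD := L4 d (S (a + b)) Hd1).
    assert (Hc : forall j, (INR b - INR a) ^ 2 - INR j ^ 2 = INR d ^ 2 - INR j ^ 2).
    { intros j. rewrite Hd. destruct (le_lt_dec a b).
      - replace (a - b)%nat with 0%nat by lia. rewrite Nat.add_0_r, minus_INR by lia. ring.
      - replace (b - a)%nat with 0%nat by lia. rewrite Nat.add_0_l, minus_INR by lia. ring. }
    rewrite (rprod_ext _ _ _ Hc).
    assert (Hd0 : INR d <> 0) by (apply not_0_INR; lia).
    set (N := rprod (filter (fun j => negb (Nat.eqb j d)) (seq 1 (S (a + b)))) (fun j => INR d ^ 2 - INR j ^ 2)) in *.
    assert (HN : N = (-1) ^ (S (a + b) - d) * INR (fact (S (a + b) - d)) * INR (fact (S (a + b) + d)) / (2 * INR d ^ 2)).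
    { rewrite <- HD. field. auto. }
    rewrite HN.
    assert (Hg : 2 * (INR (S a) - INR (S b)) ^ 2 = 2 * INR d ^ 2).
    { rewrite Hd, !S_INR. destruct (le_lt_dec a b).
      - replace (a - b)%nat with 0%nat by lia. rewrite Nat.add_0_r, minus_INR by lia. ring.
      - replace (b - a)%nat with 0%nat by lia. rewrite Nat.add_0_l, minus_INR by lia. ring. }
    assert (HS : rprod (filter (fun j => negb (Nat.eqb j (S b))) (filter (fun j => negb (Nat.eqb j (S a))) (seq 1 (S (a + b)))))
                   (fun j => 2 * (INR (S a) - INR j) ^ 2) = 2 ^ (a + b) * INR (fact a) ^ 2 * INR (fact b) ^ 2 / (2 * INR d ^ 2)).
    { rewrite <- L3. rewrite (rprod_split (filter (fun j => negb (Nat.eqb j (S a))) (seq 1 (S (a + b)))) _ (S b)).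
      - rewrite Hg. field. auto.
      - apply NoDup_filter, seq_NoDup.
      - apply filter_In. split. apply in_seq; lia. destruct (Nat.eqb (S b) (S a)) eqn:E; auto. apply Nat.eqb_eq in E. lia. }
    rewrite HS.
    assert (Hodd : (-1) ^ (S (a + b) - d) = -1).
    { rewrite Hd. destruct (le_lt_dec a b).
      - replace (S (a + b) - (b - a + (a - b)))%nat with (S (2 * a)) by lia. apply pow_1_odd.
      - replace (S (a + b) - (b - a + (a - b)))%nat with (S (2 * b)) by lia. apply pow_1_odd. }
    rewrite Hodd.
    assert (HF : INR (fact (S (a + b) - d)) * INR (fact (S (a + b) + d)) = INR (fact (2 * a + 1)) * INR (fact (2 * b + 1))).
    { rewrite Hd. destruct (le_lt_dec a b).
      - replace (S (a + b) - (b - a + (a - b)))%nat with (2 * a + 1)%nat by lia.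
        replace (S (a + b) + (b - a + (a - b)))%nat with (2 * b + 1)%nat by lia. ring.
      - replace (S (a + b) - (b - a + (a - b)))%nat with (2 * b + 1)%nat by lia.
        replace (S (a + b) + (b - a + (a - b)))%nat with (2 * a + 1)%nat by lia. ring. }
    transitivity (INR (fact (S (a + b) - d)) * INR (fact (S (a + b) + d)) / (2 ^ (a + b) * 2 ^ (a + b) * INR (fact a) ^ 2 * INR (fact b) ^ 2)).
    + field. repeat split; auto.
    + rewrite HF. auto.
Qed.


Lemma ZP n l : (1 <= n)%nat -> (1 <= l <= n)%nat ->
  - (cc n l - INR n) * rprod (seq 1 n) (fun j => cc n l + 1 - cc n j) /
    rprod (filter (fun j => negb (Nat.eqb j l)) (seq 1 n)) (fun j => cc n l - cc n j) = zprime0 n l.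
Proof.
  intros Hn Hl. destruct l as [|a]; [lia|].
  assert (exists b, n = S (a + b)) as [b ->] by (exists (n - S a)%nat; lia).
  rewrite Z_E. apply LHS_E.
Qed.

Lemma C_ext (a b : C) : fst a = fst b -> snd a = snd b -> a = b.
Proof. destruct a, b; simpl; intros; subst; auto. Qed.

Theorem mainTheorem3 (n : nat) (hn : (1 <= n)%nat)
  (z z' z'' : nat -> R -> C)
  (hroots : forall (x : R) (w : C),
      Qpoly n x w =
      Cmult (RtoC ((1 + exp (-2 * x)) ^ n))
            (cprod (seq 1 n) (fun j => Cminus w (z j x))))
  (hd1 : forall j x, (1 <= j <= n)%nat -> is_derive (z j) x (z' j x))
  (hd2 : forall j x, (1 <= j <= n)%nat -> is_derive (z' j) x (z'' j x))
  (hdist : forall j k x, (1 <= j <= n)%nat -> (1 <= k <= n)%nat -> j <> k ->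
      z j x <> z k x)
  (hord : exists eps : R, 0 < eps /\
      forall x, Rabs x < eps ->
      forall j k, (1 <= j)%nat -> (j < k)%nat -> (k <= n)%nat ->
        Im (z j x) = 0 /\ Im (z k x) = 0 /\ Re (z k x) < Re (z j x)) :
  forall l, (1 <= l <= n)%nat ->
    (forall x,
       Cplus (z'' l x) (Cmult (RtoC 2) (Cmult (z l x) (z' l x))) =
       csum (filter (fun j => negb (Nat.eqb j l)) (seq 1 n))
         (fun j => Cdiv (Cmult (RtoC 2) (Cmult (z' l x) (z' j x)))
                        (Cminus (z l x) (z j x))))
    /\ z l 0 = RtoC (INR (S n) - 2 * INR l)
    /\ z' l 0 = RtoC (zprime0 n l).
Proof.
  assert (HQ0 : forall w, Qd n 0 0 w = Cmult (RtoC (2 ^ n)) (cprod (seq 1 n) (fun j => Cminus w (z j 0)))).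
  { intros w. rewrite <- Qd0, hroots. do 3 f_equal. rewrite Rmult_0_r, exp_0. ring. }
  destruct hord as [eps [Heps hord']].
  assert (ord0 : forall j k, (1 <= j)%nat -> (j < k)%nat -> (k <= n)%nat ->
        Im (z j 0) = 0 /\ Im (z k 0) = 0 /\ Re (z k 0) < Re (z j 0)).
  { apply hord'. rewrite Rabs_R0. auto. }
  clear hord'.
  assert (h2n : RtoC (2 ^ n) <> RtoC 0).
  { intros E. apply RtoC_inj in E. revert E. apply pow_nonzero. lra. }
  assert (B1 : forall k, (1 <= k <= n)%nat -> z k 0 = RtoC (cc n k)).
  { intros k. induction k as [k IH] using (well_founded_induction lt_wf). intros Hk.
    assert (W := Wrel n (Cplus (z k 0) (RtoC 1))).
    replace (Cminus (Cplus (z k 0) (RtoC 1)) (RtoC 1)) with (z k 0) in W by ring.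
    rewrite (HQ0 (z k 0)) in W.
    rewrite (cprod_zero _ _ k) in W.
    2:{ apply in_seq. lia. }
    2:{ ring. }
    rewrite HQ0 in W.
    symmetry in W.
    assert (W' : Cmult (Cmult (Cminus (Cplus (z k 0) (RtoC 1)) (RtoC (INR n))) (RtoC (2 ^ n)))
                  (cprod (seq 1 n) (fun j => Cminus (Cplus (Cplus (z k 0) (RtoC 1)) (RtoC 1)) (z j 0))) = RtoC 0).
    { transitivity (Cmult (Cminus (Cplus (z k 0) (RtoC 1)) (RtoC (INR n))) (Cmult (RtoC (2 ^ n))
                  (cprod (seq 1 n) (fun j => Cminus (Cplus (Cplus (z k 0) (RtoC 1)) (RtoC 1)) (z j 0))))). ring.
      replace (Cplus (Cplus (z k 0) (RtoC 1)) (RtoC 1)) with (Cplus (z k 0) (RtoC 1) + RtoC 1)%C by ring.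
      rewrite W. ring. }
    clear W.
    apply Cmult_integral in W' as [W'|W'].
    - apply Cmult_integral in W' as [W'|W']; [|contradiction].
      assert (Ez : z k 0 = RtoC (INR n - 1)).
      { replace (z k 0) with (Cplus (Cminus (Cplus (z k 0) (RtoC 1)) (RtoC (INR n))) (RtoC (INR n - 1))) by (pushC; ring).
        rewrite W'. ring. }
      destruct (Nat.eq_dec k 1) as [->|Hk1].
      + rewrite Ez. unfold cc. rewrite S_INR. simpl INR. f_equal. ring.
      + exfalso. assert (IH1 := IH 1%nat ltac:(lia) ltac:(lia)).
        apply (hdist 1%nat k 0); try lia. rewrite IH1, Ez. unfold cc. rewrite S_INR. simpl INR. f_equal. ring.
    - apply cprod_eq0 in W' as [j [Hj Ej]]. apply in_seq in Hj.
      assert (Ezj : z j 0 = Cplus (z k 0) (RtoC 2)).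
      { replace (z j 0) with (Cminus (Cplus (Cplus (z k 0) (RtoC 1)) (RtoC 1)) (Cminus (Cplus (Cplus (z k 0) (RtoC 1)) (RtoC 1)) (z j 0))) by ring.
        rewrite Ej. pushC. ring. }
      destruct (lt_eq_lt_dec j k) as [[Hjk|Hjk]|Hjk].
      + assert (IHj := IH j Hjk ltac:(lia)).
        destruct (Nat.eq_dec j (k - 1)) as [Hj1|Hj1].
        * replace (z k 0) with (Cminus (z j 0) (RtoC 2)) by (rewrite Ezj; ring).
          rewrite IHj. unfold cc. rewrite Hj1. rewrite minus_INR by lia. pushC. simpl INR. ring.
        * exfalso. assert (IHk1 := IH (k - 1)%nat ltac:(lia) ltac:(lia)).
          destruct (ord0 (k - 1)%nat k ltac:(lia) ltac:(lia) ltac:(lia)) as [_ [_ Hlt]].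
          rewrite IHk1 in Hlt. replace (z k 0) with (Cminus (z j 0) (RtoC 2)) in Hlt by (rewrite Ezj; ring).
          rewrite IHj in Hlt. unfold cc in Hlt. simpl in Hlt. rewrite minus_INR in Hlt by lia.
          assert (INR j + 2 <= INR k).
          { replace 2 with (INR 2) by (simpl; ring). rewrite <- plus_INR. apply le_INR. lia. }
          simpl in Hlt. lra.
      + subst j. apply (f_equal fst) in Ezj. unfold Cplus in Ezj. simpl in Ezj. lra.
      + destruct (ord0 k j ltac:(lia) ltac:(lia) ltac:(lia)) as [_ [_ Hlt]].
        rewrite Ezj in Hlt. unfold Re, Cplus in Hlt. simpl in Hlt. lra. }
  intros l hl. split; [|split].
  - intros x. apply (partA n hn z z' z'' hroots hd1 hd2 l hl (z l x) hdist x). auto.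
  - apply B1; auto.
  - set (c := cc n l).
    assert (Hc : z l 0 = RtoC c) by (apply B1; auto).
    assert (E1 := Q1_eq n hn z z' z'' hroots hd1 l hl (RtoC c) 0).
    unfold D1v in E1. cbv beta in E1.
    rewrite Hc in E1. replace (Cminus (RtoC c) (RtoC c)) with (RtoC 0) in E1 by ring.
    assert (R := raising n (RtoC c)).
    rewrite (HQ0 (RtoC c)), (cprod_zero _ _ l) in R.
    2:{ apply in_seq. lia. }
    2:{ rewrite Hc. ring. }
    rewrite E1, HQ0 in R. clear E1.
    rewrite (cprod_ext_in (seq 1 n) _ (fun j => RtoC (c + 1 - cc n j))) in R.
    2:{ intros j Hj. apply in_seq in Hj. rewrite B1 by lia. pushC. ring. }
    rewrite (cprod_ext_in (filter _ (seq 1 n)) _ (fun j => RtoC (c - cc n j))) in R.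
    2:{ intros j Hj. apply in_L' in Hj. rewrite B1 by lia. pushC. ring. }
    rewrite !cprod_RtoC in R.
    set (Gr := rprod (seq 1 n) (fun j => c + 1 - cc n j)) in R.
    set (Hr := rprod (filter (fun j => negb (Nat.eqb j l)) (seq 1 n)) (fun j => c - cc n j)) in R.
    assert (HHr : Hr <> 0).
    { unfold Hr. apply rprod_neq0. intros j Hj. apply in_L' in Hj. unfold c, cc. intros E.
      apply (f_equal (fun r => r / 2)) in E. assert (INR j = INR l) by lra. apply INR_eq in H. lia. }
    rewrite <- (ZP n l hn hl). fold c. fold Gr Hr.
    assert (HT : Tr n 0 = 2 ^ n). { unfold Tr. rewrite Rmult_0_r, exp_0. replace (1 + 1) with 2 by ring. reflexivity. }
    rewrite HT in R.
    assert (R2 : Cmult (RtoC (2 ^ n)) (Cplus (Cmult (z' l 0) (RtoC Hr)) (Cmult (RtoC (c - INR n)) (RtoC Gr))) = RtoC 0).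
    { match type of R with ?A = ?B => transitivity (Cminus B A) end.
      pushC. ring. rewrite R. ring. }
    apply Cmult_integral in R2 as [R2|R2]; [contradiction|].
    replace (z' l 0) with (Cdiv (Cminus (Cplus (Cmult (z' l 0) (RtoC Hr)) (Cmult (RtoC (c - INR n)) (RtoC Gr))) (Cmult (RtoC (c - INR n)) (RtoC Gr))) (RtoC Hr)).
    2:{ field. intros E; apply RtoC_inj in E; auto. }
    rewrite R2. rewrite RtoC_div by auto. f_equal. pushC. field.
Qed.
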